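(* Let $W(x,y)=w(d(x,y))$ be an ultrametric graphon on $[0,1]$ (setting described in the context), with deterministic ultrametric Laplacian $L_d^k$. If $E_I^k$ is the spectral projector of $L_d^k$ attached to an interval $I$ of level $\ell<M$, then there exists $E_I\in L^2([0,1]\times[0,1])$ such that $\|T(N_kE_I^k)-T(E_I)\|_{HS}\to0$ as $k\to\infty$.
   Context: Nested partitions: fix $M\ge1$ and finite partitions $\Upsilon_1,\dots,\Upsilon_M$ of $[0,1]$ into intervals with $\Upsilon_1=\{[0,1]\}$, each interval of $\Upsilon_\ell$ ($\ell<M$) being a disjoint union of at least two intervals of $\Upsilon_{\ell+1}$; an interval of $\Upsilon_\ell$ has level $\ell$ and its children are the intervals of $\Upsilon_{\ell+1}$ it contains. Heights $h(I)>0$ with $h(I)<h(J)$ when $I\subsetneq J$; $d(x,x)=0$ and $d(x,y)=h(J)$ for $x\ne y$ with $J$ the smallest interval containing both. Ultrametric graphon $W=w\circ d$, $w:[0,\infty)\to[0,1]$ positive. Sampling: last-level intervals have rational lengths; $N$ = lcm of denominators, $N_k=kN$; each last-level interval $I$ receives $N_k\mu(I)$ equispaced points $x_1<\dots<x_{N_k}$, the $i$-th lying in the $i$-th interval of the uniform partition of $[0,1]$ into $N_k$ intervals of length $1/N_k$; $m$ is counting measure on the sample. $L_d^k=A_d^k-D_d^k$ with $A_d^k=(W(x_i,x_j))$, $D_d^k$ the row-sum diagonal. The spectral projector $E_I^k$ attached to $I$ is the $N_k\times N_k$ matrix with $E_I^k(x,y)=-\frac1{m(I)}$ if $x,y\in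 I$ are in different children of $I$, $\frac1{m(J)}-\frac1{m(I)}$ if $x,y$ lie in the same child $J$ of $I$, and $0$ if $x\notin I$ or $y\notin I$. For an $n\times n$ matrix $A$, $T(A)$ is the integral operator on $L^2([0,1])$ with kernel $A(x,y)=A_{ij}$ for $x\in[\frac{i-1}{n},\frac in)$, $y\in[\frac{j-1}{n},\frac jn)$; for a kernel $K\in L^2([0,1]^2)$, $T(K)f(x)=\int_0^1K(x,y)f(y)\,dy$; $\|\cdot\|_{HS}$ is the Hilbert–Schmidt norm. *)

(* Defs.v *)
From HB Require Import structures.
From mathcomp Require Import all_boot all_order all_algebra.
From mathcomp Require Import all_classical all_reals all_analysis.
Set Implicit Arguments. Unset Strict Implicit. Unset Printing Implicit Defensive.
Import Order.TTheory GRing.Theory Num.Theory.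
Import numFieldNormedType.Exports.
Local Open Scope classical_set_scope.
Local Open Scope ring_scope.

Section UltrametricSetting.
Variable R : realType.

Definition leb := (@lebesgue_measure R).
Definition leb2 := (leb \x leb)%E.

Definition unit_square : set (R * R) := `[0%R, 1%R]%classic `*` `[0%R, 1%R]%classic.

(* Nested partitions Ups 0, ..., Ups (M-1) (0-based; Ups l is level l+1 of
   the paper).  An interval of [0,1] is an element of 'interval R'. *)
Definition is_partition01 (P : seq (interval R)) : Prop :=
  [/\ uniq P,
      (forall I, I \in P -> [set` I] !=set0),
      (forall I J, I \in P -> J \in P -> I != J -> [set` I] `&` [set` J] = set0)
    & \bigcup_(I in [set I | I \in P]) [set` I] = `[0%R, 1%R]%classic].

Definition children (C : seq (interval R)) (I : interval R) : seq (interval R) :=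
  [seq J <- C | `[< [set` J] `<=` [set` I] >]].

Definition nested_partitions (M : nat) (Ups : nat -> seq (interval R)) : Prop :=
  [/\ (0 < M)%N,
      Ups 0%N = [:: `[0%R, 1%R]],
      (forall l, (l < M)%N -> is_partition01 (Ups l))
    & (forall l, (l.+1 < M)%N -> forall I, I \in Ups l ->
         (2 <= size (children (Ups l.+1) I))%N /\
         [set` I] = \bigcup_(J in [set J | J \in children (Ups l.+1) I]) [set` J])].

(* N = lcm of the denominators of the (rational) lengths q I of the
   last-level intervals. *)
Definition lcm_den (last : seq (interval R)) (q : interval R -> rat) : nat :=
  \big[lcmn/1%N]_(I <- last) `|denq (q I)|%N.

(* The sample with n = N_k points: the i-th point (0-based) is the midpoint of
   the i-th cell [i/n, (i+1)/n) of the uniform partition of [0,1]. *)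
Definition sample (n : nat) (i : 'I_n) : R := (i%:R + 2^-1) / n%:R.

Definition mcount (n : nat) (I : interval R) : R :=
  #|[set i : 'I_n | sample i \in I]|%:R.

(* For x = x_i in I, the
   child of I containing x_i is the (unique) interval of the next level
   containing x_i. *)
Definition projE (Ups : nat -> seq (interval R)) (l : nat) (I : interval R)
    (n : nat) : 'M[R]_n :=
  \matrix_(i, j)
    if (sample i \in I) && (sample j \in I) then
      let J := nth I (Ups l.+1) (find (fun J => sample i \in J) (Ups l.+1)) in
      if sample j \in J then (mcount n J)^-1 - (mcount n I)^-1
      else - (mcount n I)^-1
    else 0.

Definition step_kernel (n : nat) (A : 'M[R]_n) (z : R * R) : R :=
  \sum_(i < n) \sum_(j < n)
    A i j * \1_(`[i%:R / n%:R, i.+1%:R / n%:R[%classic) z.1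
          * \1_(`[j%:R / n%:R, j.+1%:R / n%:R[%classic) z.2.

(* squared L^2([0,1]^2) norm of a kernel = squared Hilbert-Schmidt norm of
   the associated integral operator *)
Definition L2sq (K : R * R -> R) : \bar R :=
  (\int[leb2]_(z in unit_square) (K z ^+ 2)%:E)%E.

End UltrametricSetting.

(* Main.v *)
Require Import Defs.
From HB Require Import structures.
From mathcomp Require Import all_boot all_order all_algebra.
From mathcomp Require Import all_classical all_reals all_analysis.
From mathcomp Require Import measurable_realfun.
From mathcomp Require Import ring lra zify.
Import Order.TTheory GRing.Theory Num.Theory.
Import numFieldNormedType.Exports.
Local Open Scope classical_set_scope.
Local Open Scope ring_scope.

Set Implicit Arguments. Unset Strict Implicit. Unset Printing Implicit Defensive.


Lemma big_reindex {T} {idx : T} (op : Monoid.law idx) (k N : nat) (H : nat -> T):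
  \big[op/idx]_(i < k * N) H i = \big[op/idx]_(a < N) \big[op/idx]_(r < k) H (a * k + r)%N.
Proof.
elim: N => [|N IH]; first by rewrite muln0 !big_ord0.
rewrite mulnSr -(big_mkord xpredT H) (big_cat_nat _ (leq_addr k (k * N))) //= big_mkord IH big_ord_recr /=; congr (op _ _).
rewrite -{1}[(k * N)%N]add0n big_addn addKn big_mkord; apply: eq_bigr => r _.
by rewrite addnC mulnC.
Qed.

Section S.
Variable R : realType.
Lemma ind_split (s t w x : R) : s <= t -> t <= w ->
  \1_(`[s, t[%classic) x + \1_(`[t, w[%classic) x = \1_(`[s, w[%classic) x :> R.
Proof.
move=> st tw; rewrite !indicE !mem_setE !in_itv /=.
case: (leP s x) => h1; case: (ltP x t) => h2; case: (leP t x) => h3; case: (ltP x w) => h4 /=; rewrite ?mulr1n ?mulr0n ?addr0 ?add0r //; try lra.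
Qed.


Lemma ind_tele (n : R) (c m : nat) x : 0 < n ->
  \sum_(r < m) \1_(`[(c + r)%N%:R / n, (c + r).+1%:R / n[%classic) x
  = \1_(`[c%:R / n, (c + m)%N%:R / n[%classic) x :> R.
Proof.
move=> n0; elim: m => [|m IH].
  rewrite big_ord0 addn0 indicE mem_setE in_itv /=.
  by case: (leP (c%:R / n) x) => h1; case: (ltP x (c%:R / n)) => h2 //=; lra.
rewrite big_ord_recr /= IH addnS ind_split //.
  by rewrite ler_pM2r ?invr_gt0 // ler_nat leq_addr.
by rewrite ler_pM2r ?invr_gt0 // ler_nat.
Qed.

Lemma L1 (k N : nat) (f : nat -> R) (y : R) : (0 < k)%N -> (0 < N)%N ->
 \sum_(j < (k * N)%N) f (j %/ k)%N * \1_(`[j%:R / (k * N)%N%:R, j.+1%:R / (k * N)%N%:R[%classic) y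
 = \sum_(b < N) f b * \1_(`[b%:R / N%:R, b.+1%:R / N%:R[%classic) y.
Proof.
move=> k0 N0; rewrite (big_reindex _ k N (fun j => f (j %/ k)%N * \1_(`[j%:R / (k * N)%N%:R, j.+1%:R / (k * N)%N%:R[%classic) y)) /=; apply: eq_bigr => b _.
under eq_bigr => r _ do rewrite divnMDl // divn_small // addn0.
rewrite -mulr_sumr ind_tele; last by rewrite ltr0n muln_gt0 k0.
have kr : (k%:R : R) != 0 by rewrite pnatr_eq0 -lt0n.
have Nr : (N%:R : R) != 0 by rewrite pnatr_eq0 -lt0n.
have E a : (a * k)%N%:R / (k * N)%N%:R = a%:R / N%:R :> R.
  by rewrite !natrM; field; rewrite Nr kr.
by rewrite -mulSnr !E.
Qed.

Definition ordm (N : nat) (HN : (0 < N)%N) (a : nat) : 'I_N := Ordinal (ltn_pmod a HN).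

Lemma ordmE (N : nat) (HN : (0 < N)%N) (a : 'I_N) : ordm HN a = a.
Proof. by apply: val_inj => /=; rewrite modn_small. Qed.

Lemma step_refine (k N : nat) (HN : (0 < N)%N) (Hk : (0 < k)%N)
  (A : 'M[R]_(k * N)%N) (B : 'M[R]_N) :
  (forall i j : 'I_(k * N)%N, A i j = B (ordm HN (i %/ k)) (ordm HN (j %/ k))) ->
  forall z, step_kernel A z = step_kernel B z.
Proof.
move=> hAB [x y]; rewrite /step_kernel /=.
pose g a b := B (ordm HN a) (ordm HN b).
pose F a := \sum_(b < N) g a b * \1_(`[b%:R / N%:R, b.+1%:R / N%:R[%classic) y.
transitivity (\sum_(i < (k * N)%N) F (i %/ k)%N
   * \1_(`[i%:R / (k * N)%N%:R, i.+1%:R / (k * N)%N%:R[%classic) x).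
  apply: eq_bigr => i _.
  rewrite /F -(L1 (g (i %/ k)%N) y Hk HN) mulr_suml; apply: eq_bigr => j _.
  by rewrite hAB mulrAC.
rewrite (L1 F x Hk HN); apply: eq_bigr => a _.
rewrite /F mulr_suml; apply: eq_bigr => b _.
by rewrite /g !ordmE mulrAC.
Qed.
End S.


Section S2.
Variable R : realType.

Definition cellP (N : nat) (J : interval R) : Prop :=
  forall (a : nat) (u v : R), a%:R / N%:R < u < a.+1%:R / N%:R ->
    a%:R / N%:R < v < a.+1%:R / N%:R -> (u \in J) = (v \in J).

Lemma cell_num (k N a i : nat) : (0 < k)%N -> (0 < N)%N ->
  (a * k <= i)%N -> (i < a * k + k)%N ->
  (a%:R / N%:R : R) < ((i%:R + 2^-1) / (k * N)%N%:R : R) < (a.+1%:R / N%:R : R).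
Proof.
move=> k0 N0 h1 h2.
have kr : (k%:R : R) != 0 by rewrite pnatr_eq0 -lt0n.
have Nr : (N%:R : R) != 0 by rewrite pnatr_eq0 -lt0n.
have E c : (c * k)%N%:R / (k * N)%N%:R = c%:R / N%:R :> R.
  by rewrite !natrM; field; rewrite Nr kr.
rewrite -!E mulSnr.
have kN : (0 : R) < ((k * N)%N%:R)^-1 by rewrite invr_gt0 ltr0n muln_gt0 k0.
rewrite !ltr_pM2r //.
have : (a * k)%N%:R <= i%:R :> R by rewrite ler_nat.
have : i.+1%:R <= (a * k + k)%N%:R :> R by rewrite ler_nat.
rewrite -addn1 natrD; lra.
Qed.

Lemma sample_fine (k N : nat) (i : 'I_(k * N)%N) : (0 < k)%N -> (0 < N)%N ->
  ((i %/ k)%N%:R / N%:R : R) < sample R i < ((i %/ k).+1%:R / N%:R : R).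
Proof.
move=> k0 N0; rewrite /sample; apply: cell_num => //.
  by rewrite leq_trunc_div.
by rewrite -mulSnr ltn_ceil.
Qed.

Lemma sample_coarse (N : nat) (a : 'I_N) : (0 < N)%N ->
  (a%:R / N%:R : R) < sample R a < (a.+1%:R / N%:R : R).
Proof.
move=> N0; rewrite /sample.
have := @cell_num 1 N a a (erefl _) N0; rewrite mul1n muln1 addn1 leqnn ltnSn.
by apply.
Qed.

Lemma card_sum n (P : pred 'I_n) : #|[set i | P i]| = (\sum_(i < n) P i)%N.
Proof.
rewrite -sum1_card big_mkcond /=; apply: eq_bigr => i _.
have -> : (i \in [set i | P i]) = P i.
  by apply/idP/idP => h; [exact: (set_mem h) | exact: (mem_set h)].
by case: (P i).
Qed.

Lemma memE (k N : nat) (HN : (0 < N)%N) (Hk : (0 < k)%N) (J : interval R)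
  (i : 'I_(k * N)%N) : cellP N J ->
  (sample R i \in J) = (sample R (ordm HN (i %/ k)) \in J).
Proof.
move=> cJ; apply: (cJ (i %/ k)%N); first exact: sample_fine.
have ov : nat_of_ord (ordm HN (i %/ k)) = (i %/ k)%N.
  rewrite /= modn_small // ltn_divLR //; exact: (leq_trans (ltn_ord i) (eq_leq (mulnC k N))).
by have := sample_coarse (ordm HN (i %/ k)) HN; rewrite ov.
Qed.

Lemma mcount_refine (k N : nat) (HN : (0 < N)%N) (Hk : (0 < k)%N) (J : interval R) :
  cellP N J -> mcount (k * N)%N J = k%:R * mcount N J.
Proof.
move=> cJ; rewrite /mcount -natrM; congr (_%:R).
rewrite !card_sum.
under eq_bigr => i _ do rewrite (memE HN Hk i cJ).
rewrite (big_reindex _ k N (fun i => nat_of_bool (sample R (ordm HN (i %/ k)) \in J))) /=.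
rewrite big_distrr /=; apply: eq_bigr => a _.
under eq_bigr => r _ do rewrite divnMDl // divn_small // addn0 ordmE.
by rewrite sum_nat_const card_ord.
Qed.

Lemma inv_refine (k N : nat) (m : R) : (0 < k)%N ->
  (k * N)%N%:R * (k%:R * m)^-1 = N%:R * m^-1.
Proof.
move=> k0; have kr : (k%:R : R) != 0 by rewrite pnatr_eq0 -lt0n.
by rewrite natrM invfM mulrACA mulfV // mul1r.
Qed.

Lemma projE_refine (Ups : nat -> seq (interval R)) l I (k N : nat)
  (HN : (0 < N)%N) (Hk : (0 < k)%N) :
  cellP N I -> (forall J, J \in Ups l.+1 -> cellP N J) ->
  forall i j : 'I_(k * N)%N,
  ((k * N)%N%:R *: projE Ups l I (k * N)%N) i j
  = (N%:R *: projE Ups l I N) (ordm HN (i %/ k)) (ordm HN (j %/ k)).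
Proof.
move=> cI cU i j; rewrite !mxE.
set a := ordm HN (i %/ k); set b := ordm HN (j %/ k).
have hf : find (fun J => sample R i \in J) (Ups l.+1)
        = find (fun J => sample R a \in J) (Ups l.+1).
  by apply: eq_in_find => J JU /=; rewrite (memE HN Hk i (cU J JU)).
rewrite hf.
set J := nth I (Ups l.+1) _.
have cJ : cellP N J.
  rewrite /J; case: (ltnP (find (fun J => sample R a \in J) (Ups l.+1)) (size (Ups l.+1))) => h.
    by apply: cU; rewrite mem_nth.
  by rewrite nth_default.
rewrite (memE HN Hk i cI) (memE HN Hk j cI) -/a -/b; cbv zeta.
rewrite (memE HN Hk j cJ) -/b.
rewrite !(mcount_refine HN Hk cJ) !(mcount_refine HN Hk cI).
case: (_ && _); last by rewrite !mulr0.
case: (_ \in J).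
  by rewrite !mulrBr !inv_refine.
by rewrite !mulrN !inv_refine.
Qed.
End S2.


Section Arith.
Variable R : realType.

Lemma lcm_den_gt0 (s : seq (interval R)) q : (0 < lcm_den s q)%N.
Proof.
rewrite /lcm_den; elim: s => [|K s IH]; first by rewrite big_nil.
by rewrite big_cons lcmn_gt0 IH andbT absz_gt0 denq_neq0.
Qed.

Lemma lcm_den_dvd (s : seq (interval R)) q K : K \in s ->
  (`|denq (q K)| %| lcm_den s q)%N.
Proof.
rewrite /lcm_den; elim: s => [|K' s IH] //; rewrite in_cons big_cons.
case/orP => [/eqP -> | /IH h]; first exact: dvdn_lcml.
exact: (dvdn_trans h (dvdn_lcmr _ _)).
Qed.

Lemma ratr_int_mul (x : rat) (N : nat) : (`|denq x| %| N)%N ->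
  exists z : int, ratr x * N%:R = z%:~R :> R.
Proof.
case/dvdnP => m ->; exists (numq x * m%:Z).
have -> : (m * `|denq x|)%N%:R = ratr ((m * `|denq x|)%N%:R) :> R by rewrite ratr_nat.
rewrite -rmorphM /= -ratr_int; congr ratr.
rewrite natrM natr_absz gtr0_norm ?denq_gt0 // mulrCA -numqE intrM mulrC.
by [].
Qed.

Lemma leb_0p (p : R) : 0 <= p -> leb `[0, p]%classic = p%:E.
Proof.
move=> p0; rewrite /leb lebesgue_measure_itv /= lte_fin oppr0 addr0.
by case: ltP => // h; have -> : p = 0 by apply/le_anti; rewrite h p0.
Qed.


Lemma cell_int_contra (N a : nat) (z : int) (p p' r : R) : (0 < N)%N ->
  a%:R / N%:R < p -> p' < a.+1%:R / N%:R -> p <= r -> r <= p' ->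
  r * N%:R = z%:~R -> False.
Proof.
move=> N0 h1 h2 h3 h4 e.
have Np : (0 : R) < N%:R by rewrite ltr0n.
rewrite ltr_pdivrMr // in h1; rewrite ltr_pdivlMr // in h2.
have h5 : ((a%:Z)%:~R : R) < z%:~R.
  by rewrite -e; apply: (lt_le_trans h1); rewrite ler_pM2r.
have h6 : (z%:~R : R) < (a.+1%:Z)%:~R.
  by rewrite -e; apply: (le_lt_trans _ h2); rewrite ler_pM2r.
rewrite ltr_int in h5; rewrite ltr_int in h6; lia.
Qed.

Lemma mem_bigU (s : seq (interval R)) x :
  (\big[setU/set0]_(K <- s) [set` K]) x <-> exists2 K, K \in s & x \in K.
Proof.
elim: s => [|K s IH]; first by rewrite big_nil; split => // -[].
rewrite big_cons; split.
  case => [xK | /IH [K' K's xK']]; first by exists K; rewrite ?mem_head.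
  by exists K'; rewrite // in_cons K's orbT.
case=> K'; rewrite in_cons => /orP [/eqP -> xK | K's xK']; first by left.
by right; apply/IH; exists K'.
Qed.

Section Geo.
Variable P : seq (interval R).
Variable q : interval R -> rat.
Hypothesis hP : is_partition01 P.
Hypothesis hq : forall J, J \in P -> leb [set` J] = (ratr (q J))%:E.
Let N := lcm_den P q.

Lemma sub01 K x : K \in P -> x \in K -> 0 <= x <= 1.
Proof.
case: hP => _ _ _ cP KP xK.
have : `[(0:R), 1]%classic x by rewrite -cP; exists K.
by rewrite /= in_itv.
Qed.

Lemma cover x : 0 <= x <= 1 -> exists2 K, K \in P & x \in K.
Proof.
case: hP => _ _ _ cP h.
have : (\bigcup_(I in [set I | I \in P]) [set` I]) x by rewrite cP /= in_itv.
by case=> K /= KP xK; exists K.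
Qed.

Lemma leb_bigU (s : seq (interval R)) : uniq s -> {subset s <= P} ->
  leb (\big[setU/set0]_(K <- s) [set` K]) = \sum_(K <- s) leb [set` K].
Proof.
case: hP => _ _ dP _.
elim: s => [|K s IH]; first by rewrite !big_nil /leb measure0.
rewrite /= => /andP [Ks us] sP.
have sP' : {subset s <= P} by move=> J Js; apply: sP; rewrite in_cons Js orbT.
have IH' := IH us sP'.
move: IH'; rewrite !big_cons /leb => IH'.
rewrite measureU //.
- by rewrite -IH'.
- by apply: bigsetU_measurable => J _; exact: measurable_itv.
rewrite -subset0 => x [xK /mem_bigU [K' K's xK']].
have KK' : K != K' by apply: contraNneq Ks => ->.
have K'P : K' \in P by apply: sP; rewrite in_cons K's orbT.
have e := dP K K' (sP K (mem_head _ _)) K'P KK'.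
have : ([set` K] `&` [set` K']) x by split.
by rewrite e.
Qed.



Lemma sum_int (s : seq (interval R)) : {subset s <= P} ->
  exists z : int, (\sum_(K <- s) ratr (q K)) * N%:R = z%:~R :> R.
Proof.
elim: s => [|K s IH] sP; first by exists 0; rewrite big_nil mul0r.
have sP' : {subset s <= P} by move=> J Js; apply: sP; rewrite in_cons Js orbT.
have [z1 e1] := IH sP'.
have [z2 e2] := ratr_int_mul (lcm_den_dvd q (sP K (mem_head _ _))).
by exists (z2 + z1); rewrite big_cons mulrDl e1 e2 intrD.
Qed.

Lemma sat_measure (S : set R) : (forall x, S x -> 0 <= x <= 1) ->
  (forall x K, S x -> K \in P -> x \in K -> forall y, y \in K -> S y) ->
  measurable S /\ exists r : R, leb S = r%:E /\ exists z : int, r * N%:R = z%:~R.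
Proof.
move=> S01 sat.
pose s := [seq K <- P | `[< forall y, y \in K -> S y >]].
have eS : S = \big[setU/set0]_(K <- s) [set` K].
  apply/seteqP; split => x.
    move=> Sx; have [K KP xK] := cover (S01 x Sx).
    apply/mem_bigU; exists K => //; rewrite mem_filter KP andbT.
    by apply/asboolP; exact: sat xK.
  case/mem_bigU => K; rewrite mem_filter => /andP [/asboolP h _] xK.
  exact: h.
split; first by rewrite eS; apply: bigsetU_measurable => J _; exact: measurable_itv.
have sP : {subset s <= P} by move=> J; rewrite mem_filter => /andP [].
exists (\sum_(K <- s) ratr (q K)); split; last exact: sum_int.
rewrite eS leb_bigU ?filter_uniq //; last by case: hP.
rewrite big_seq (eq_bigr (fun K => (ratr (q K))%:E)); last by move=> K Ks; rewrite hq // sP.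
by rewrite -big_seq sumEFin.
Qed.



Lemma leb_le (A B : set R) : measurable A -> measurable B -> A `<=` B -> (leb A <= leb B)%E.
Proof. by move=> mA mB AB; apply: le_measure => //; rewrite inE. Qed.

Lemma disj K1 K2 x : K1 \in P -> K2 \in P -> x \in K1 -> x \in K2 -> K1 = K2.
Proof.
case: hP => _ _ dP _ K1P K2P x1 x2.
case: (eqVneq K1 K2) => // nK; have e := dP K1 K2 K1P K2P nK.
have : ([set` K1] `&` [set` K2]) x by split.
by rewrite e.
Qed.

Lemma cell_last K : K \in P -> cellP N K.
Proof.
move=> KP a.
have N0 : (0 < N)%N by exact: lcm_den_gt0.
have a0 : (0 : R) <= a%:R / N%:R by rewrite divr_ge0.
suff H : forall u v, a%:R / N%:R < u < a.+1%:R / N%:R ->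
    a%:R / N%:R < v < a.+1%:R / N%:R -> u \in K -> v \in K.
  by move=> u v hu hv; apply/idP/idP; apply: H.
move=> u v /andP [hu1 hu2] /andP [hv1 hv2] uK.
case: (boolP (v \in K)) => // vK; exfalso.
have conv := @interval_is_interval R K.
have /andP [u0 u1] := sub01 KP uK.
have v0 : 0 <= v by apply: ltW; apply: le_lt_trans hv1.
case: (ltgtP u v) => [uv | vu | e]; last by rewrite -e uK in vK.
- pose S := [set x : R | (0 <= x <= 1) /\ exists2 y, y \in K & x <= y].
  have [mS [r [er [z ez]]]] : measurable S /\ exists r : R, leb S = r%:E /\ exists z : int, r * N%:R = z%:~R.
    apply: sat_measure; first by move=> x [].
    move=> x K' [x01 [k kK xk]] K'P xK' y yK'.
    split; first exact: (sub01 K'P yK').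
    case: (leP y k) => yk; first by exists k.
    have kK' : k \in K' by apply: (@interval_is_interval R K' x y) => //; rewrite xk (ltW yk).
    have eK := disj K'P KP kK' kK.
    by exists y; rewrite // -eK.
  have h1 : (u%:E <= r%:E)%E.
    rewrite -er -(leb_0p u0); apply: leb_le; [exact: measurable_itv | exact: mS | ].
    move=> x /=; rewrite in_itv /= => /andP [x0 xu].
    split; first by rewrite x0 (le_trans xu u1).
    by exists u.
  have h2 : (r%:E <= v%:E)%E.
    rewrite -er -(leb_0p v0); apply: leb_le; [exact: mS | exact: measurable_itv | ].
    move=> x [/andP [x0 x1] [k kK xk]] /=; rewrite in_itv /= x0 /=.
    case: (leP x v) => // vx; exfalso; move/negP: vK; apply.
    by apply: (conv u k) => //; rewrite (ltW uv) (le_trans (ltW vx) xk).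
  rewrite !lee_fin in h1 h2.
  exact: (cell_int_contra N0 hu1 hv2 h1 h2 ez).
- pose S := [set x : R | (0 <= x <= 1) /\ forall y, y \in K -> x < y].
  have [mS [r [er [z ez]]]] : measurable S /\ exists r : R, leb S = r%:E /\ exists z : int, r * N%:R = z%:~R.
    apply: sat_measure; first by move=> x [].
    move=> x K' [x01 xK] K'P xK' y yK'.
    split; first exact: (sub01 K'P yK').
    move=> k kK; case: (ltP y k) => // ky; exfalso.
    have kK' : k \in K' by apply: (@interval_is_interval R K' x y) => //; rewrite ky (ltW (xK k kK)).
    have eK := disj K'P KP kK' kK.
    by move: (xK x); rewrite -eK ltxx => /(_ xK').
  have h1 : (v%:E <= r%:E)%E.
    rewrite -er -(leb_0p v0); apply: leb_le; [exact: measurable_itv | exact: mS | ].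
    move=> x /=; rewrite in_itv /= => /andP [x0 xv].
    split; first by rewrite x0 (le_trans xv (le_trans (ltW vu) u1)).
    move=> k kK; case: (ltP x k) => // kx; exfalso; move/negP: vK; apply.
    by apply: (conv k u) => //; rewrite (ltW vu) (le_trans kx xv).
  have h2 : (r%:E <= u%:E)%E.
    rewrite -er -(leb_0p u0); apply: leb_le; [exact: mS | exact: measurable_itv | ].
    move=> x [/andP [x0 x1] xK] /=; rewrite in_itv /= x0 /=.
    exact: ltW (xK u uK).
  rewrite !lee_fin in h1 h2.
  exact: (cell_int_contra N0 hv1 hu2 h1 h2 ez).
Qed.

End Geo.

Lemma cell_all (M : nat) (Ups : nat -> seq (interval R)) q :
  nested_partitions M Ups ->
  (forall J, J \in Ups M.-1 -> leb [set` J] = (ratr (q J))%:E) ->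
  forall l', (l' < M)%N -> forall J, J \in Ups l' -> cellP (lcm_den (Ups M.-1) q) J.
Proof.
move=> [M0 U0 Upart Unest] hq.
suff H : forall d l', (l' + d = M.-1)%N -> forall J, J \in Ups l' ->
    cellP (lcm_den (Ups M.-1) q) J.
  by move=> l' lM; apply: (H (M.-1 - l')%N); lia.
elim=> [|d IH] l' e J JU.
  rewrite addn0 in e; subst l'.
  by apply: cell_last => //; apply: Upart; lia.
have l'M : (l'.+1 < M)%N by lia.
have [_ eJ] := Unest l' l'M J JU.
have e1 x : x \in J <-> exists2 C, C \in children (Ups l'.+1) J & x \in C.
  split => h.
    have : [set` J] x by [].
    by rewrite eJ => -[C /= CC xC]; exists C.
  case: h => C CC xC.
  have : (\bigcup_(C in [set C | C \in children (Ups l'.+1) J]) [set` C]) x by exists C.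
  by rewrite -eJ.
have IH' : forall C, C \in children (Ups l'.+1) J -> cellP (lcm_den (Ups M.-1) q) C.
  move=> C; rewrite mem_filter => /andP [_ CU]; apply: (IH l'.+1) => //; lia.
move=> a u v hu hv; apply/idP/idP => /e1 [C CC xC]; apply/e1; exists C => //.
  by rewrite -(IH' C CC a u v hu hv).
by rewrite (IH' C CC a u v hu hv).
Qed.
End Arith.


Section Fin.
Variable R : realType.

Lemma step_bound n (A : 'M[R]_n) z :
  `|step_kernel A z| <= \sum_(i < n) \sum_(j < n) `|A i j|.
Proof.
rewrite /step_kernel; apply: (le_trans (ler_norm_sum _ _ _)); apply: ler_sum => i _.
apply: (le_trans (ler_norm_sum _ _ _)); apply: ler_sum => j _.
have hb (S : set R) x : `|\1_S x| <= 1 :> R by rewrite indicE; case: (x \in S); rewrite ?normr1 ?normr0.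
rewrite !normrM -[X in _ <= X]mulr1 -[X in _ <= X]mulr1.
by rewrite ler_pM ?mulr_ge0 // ler_pM.
Qed.

Lemma step_measurable n (A : 'M[R]_n) :
  measurable_fun (@unit_square R) (step_kernel A).
Proof.
rewrite /step_kernel; apply: measurable_sum => i; apply: measurable_sum => j.
apply: measurable_realfun.measurable_funM; first apply: measurable_realfun.measurable_funM.
- exact: measurable_cst.
- apply: measurableT_comp; first exact: measurable_realfun.measurable_indic (measurable_itv _).
  exact: measurable_funTS measurable_fst.
- apply: measurableT_comp; first exact: measurable_realfun.measurable_indic (measurable_itv _).
  exact: measurable_funTS measurable_snd.
Qed.

Lemma leb2_square : leb2 (@unit_square R) = 1%E.
Proof.
rewrite /leb2 /unit_square product_measure1E; try exact: measurable_itv.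
change (@leb R `[0%R, 1%R]%classic * @leb R `[0%R, 1%R]%classic = 1)%E.
by rewrite leb_0p ?ler01 // mule1.
Qed.


Lemma msquare : measurable (@unit_square R).
Proof. by apply: measurableX; exact: measurable_itv. Qed.

Lemma L2_step_finite n (A : 'M[R]_n) : (L2sq (step_kernel A) < +oo)%E.
Proof.
set C := \sum_(i < n) \sum_(j < n) `|A i j|.
have hb z : (step_kernel A z) ^+ 2 <= C ^+ 2.
  have := step_bound A z; rewrite -/C ler_norml => /andP [h1 h2]; nra.
have mE : measurable_fun (@unit_square R) (fun z => (step_kernel A z ^+ 2)%:E).
  apply/measurable_realfun.measurable_EFinP.
  exact: measurable_realfun.measurable_funX (step_measurable A).
rewrite /L2sq.
apply: (@le_lt_trans _ _ (\int[@leb2 R]_(z in @unit_square R) (cst (C ^+ 2)%:E) z)%E).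
  apply: ge0_le_integral; first exact: msquare.
  - by move=> z _; rewrite lee_fin sqr_ge0.
  - exact: mE.
  - exact: measurable_cst.
  - by move=> z _; rewrite lee_fin.
rewrite integral_cst; last exact: msquare.
set m := (X in (_ * X)%E).
have -> : m = 1%E by exact: leb2_square.
by rewrite mule1 ltry.
Qed.
End Fin.


Unset Implicit Arguments. Set Strict Implicit.

Theorem proposition8p1 (R : realType) (M : nat) (Ups : nat -> seq (interval R))
  (q : interval R -> rat) (l : nat) (I : interval R) :
  nested_partitions M Ups ->
  (forall J, J \in Ups M.-1 -> @leb R [set` J] = (ratr (q J))%:E) ->
  (l.+1 < M)%N -> I \in Ups l ->
  let N := lcm_den (Ups M.-1) q in
  exists E : R * R -> R,
    [/\ measurable_fun (@unit_square R) E,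
        (L2sq E < +oo)%E
      & (fun k : nat =>
           L2sq (fun z => step_kernel ((k * N)%N%:R *: projE Ups l I (k * N)) z - E z))
        @ \oo --> 0%E].
Proof.
move=> hNP hq lM IU N.
have N0 : (0 < N)%N by exact: lcm_den_gt0.
have cI : cellP N I by apply: (cell_all hNP hq (l' := l)) => //; lia.
have cU : forall J, J \in Ups l.+1 -> cellP N J by exact: (cell_all hNP hq lM).
exists (step_kernel (N%:R *: projE Ups l I N)); split.
- exact: step_measurable.
- exact: L2_step_finite.
apply: cvg_near_cst; exists 1%N => // k /= k1.
have e : (fun z => step_kernel ((k * N)%N%:R *: projE Ups l I (k * N)) z
   - step_kernel (N%:R *: projE Ups l I N) z) = (fun _ => 0).
  apply/funext => z.
  by rewrite (step_refine k1 (projE_refine N0 k1 cI cU)) subrr.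
rewrite e /L2sq.
have -> : (fun z : R * R => (((0 : R) ^+ 2)%:E)) = cst 0%E.
  by apply/funext => z; rewrite expr0n.
exact: integral0.
Qed.
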